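(* Let $p:\mathcal{Q}\to\mathcal{C}$ be a functor of categories. If $p$ is ULF, then the functor of operads $\mathcal{W}(p):\mathcal{W}(\mathcal{Q})\to\mathcal{W}(\mathcal{C})$ is ULF; and if $p$ is finitary, then $\mathcal{W}(p)$ is finitary.
   Context: Composition in categories is written diagrammatically. Operads are colored (non-symmetric) operads/multicategories: operations $f:A_1,\dots,A_n\to A$ with partial compositions $g\circ_i h$ (plugging $h$ into the $i$-th input of $g$) and identities. For a category $\mathcal{C}$, the operad of spliced arrows $\mathcal{W}(\mathcal{C})$ has as colors pairs $(A,B)$ of objects of $\mathcal{C}$; an $n$-ary operation $(A_1,B_1),\dots,(A_n,B_n)\to(A,B)$ is a sequence $w_0\text{-}w_1\text{-}\cdots\text{-}w_n$ of arrows $w_0:A\to A_1$, $w_i:B_i\to A_{i+1}$ for $1\le i<n$, and $w_n:B_n\to B$ (for $n=0$, a single arrow $w_0:A\to B$, so constants of color $(A,B)$ are arrows $A\to B$). Partial composition is $(w_0\text{-}\cdots\text{-}w_n)\circ_i(u_0\text{-}\cdots\text{-}u_m)=w_0\text{-}\cdots\text{-}w_{i-2}\text{-}(w_{i-1}u_0)\text{-}u_1\text{-}\cdots\text{-}u_{m-1}\text{-}(u_m w_i)\text{-}w_{i+1}\text{-}\cdots\text{-}w_n$, and the identity on $(A,B)$ is $\mathrm{id}_A\text{-}\mathrm{id}_B$. For a functor $p$, $\mathcal{W}(p)$ sends $(q,q')\mapsto(p(q),p(q'))$ and $w_0\text{-}\cdots\text{-}w_n\mapsto p(w_0)\text{-}\cdots\text{-}p(w_n)$.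 A functor of categories $p$ is ULF if for every arrow $\alpha$ and arrows $u,v$ with $p(\alpha)=uv$ there is a unique pair $\beta,\gamma$ with $\alpha=\beta\gamma$, $p(\beta)=u$, $p(\gamma)=v$. A functor of operads $p:\mathcal{D}\to\mathcal{O}$ is ULF if for every operation $\alpha$ of $\mathcal{D}$ and operations $g,h$ of $\mathcal{O}$ and index $i$ with $p(\alpha)=g\circ_i h$ there is a unique pair of operations $\beta,\gamma$ of $\mathcal{D}$ with $\alpha=\beta\circ_i\gamma$, $p(\beta)=g$, $p(\gamma)=h$. A functor (of categories or operads) is finitary if the fiber over each object/color and the fiber over each arrow/operation is finite. *)

(* Defs.v *)
From Stdlib Require Import List.
Import ListNotations.
Set Implicit Arguments.
Unset Strict Implicit.

(** * Categories (composition written diagrammatically: [ccomp f g] = "f then g") *)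
Record Category := {
  Ob : Type;
  Hom : Ob -> Ob -> Type;
  cid : forall A, Hom A A;
  ccomp : forall A B C, Hom A B -> Hom B C -> Hom A C;
  ccomp_id_l : forall A B (f : Hom A B), ccomp (cid A) f = f;
  ccomp_id_r : forall A B (f : Hom A B), ccomp f (cid B) = f;
  ccomp_assoc : forall A B C D (f : Hom A B) (g : Hom B C) (h : Hom C D),
      ccomp (ccomp f g) h = ccomp f (ccomp g h)
}.
Arguments Hom : clear implicits.
Arguments cid {c} A.
Arguments ccomp {c A B C} _ _.

Record Functor (Q C : Category) := {
  fob : Ob Q -> Ob C;
  fhom : forall A B, Hom Q A B -> Hom C (fob A) (fob B);
  fhom_id : forall A, fhom (cid A) = cid (fob A);
  fhom_comp : forall A B D (f : Hom Q A B) (g : Hom Q B D),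
      fhom (ccomp f g) = ccomp (fhom f) (fhom g)
}.
Arguments fob {Q C} _ _.
Arguments fhom {Q C} _ {A B} _.

Definition Arr (C : Category) := { ab : Ob C * Ob C & Hom C (fst ab) (snd ab) }.
Definition mkArr (C : Category) (A B : Ob C) (f : Hom C A B) : Arr C :=
  existT (fun ab => Hom C (fst ab) (snd ab)) (A, B) f.
Definition arrmap Q C (p : Functor Q C) (x : Arr Q) : Arr C :=
  mkArr (fhom p (projT2 x)).

Definition ULF_functor Q C (p : Functor Q C) : Prop :=
  forall (a b : Ob Q) (alpha : Hom Q a b) (M : Ob C)
         (u : Hom C (fob p a) M) (v : Hom C M (fob p b)),
    fhom p alpha = ccomp u v ->
    let P := fun s : { m : Ob Q & (Hom Q a m * Hom Q m b)%type } =>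
      ccomp (fst (projT2 s)) (snd (projT2 s)) = alpha /\
      mkArr (fhom p (fst (projT2 s))) = mkArr u /\
      mkArr (fhom p (snd (projT2 s))) = mkArr v in
    exists s, P s /\ forall s', P s' -> s' = s.

Definition finite_fiber (X Y : Type) (f : X -> Y) (y : Y) : Prop :=
  exists l : list X, forall x, f x = y -> In x l.

Definition finitary_functor Q C (p : Functor Q C) : Prop :=
  (forall X : Ob C, finite_fiber (fob p) X) /\
  (forall x : Arr C, finite_fiber (arrmap p) x).

(** Partial composition [g o_i h] with i = size l1 + 1 is
    [ocomp g h] for g : Op (l1 ++ c :: l2) out, h : Op l' c. *)
Record OperadData := {
  Col : Type;
  Op : list Col -> Col -> Type;
  oid : forall c, Op [c] c;
  ocomp : forall (l1 : list Col) (c : Col) (l2 : list Col) (out : Col) (l' : list Col),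
      Op (l1 ++ c :: l2) out -> Op l' c -> Op (l1 ++ l' ++ l2) out
}.
Arguments Op : clear implicits.
Arguments oid {o} c.
Arguments ocomp {o l1 c l2 out l'} _ _.

Definition TotOp (O : OperadData) :=
  { io : list (Col O) * Col O & Op O (fst io) (snd io) }.
Definition mkOp (O : OperadData) (l : list (Col O)) (c : Col O) (x : Op O l c) : TotOp O :=
  existT (fun io => Op O (fst io) (snd io)) (l, c) x.

Record OperadMor (D O : OperadData) := {
  fcol : Col D -> Col O;
  fop : forall l c, Op D l c -> Op O (map fcol l) (fcol c)
}.
Arguments fcol {D O} _ _.
Arguments fop {D O} _ {l c} _.

Definition opmap D O (p : OperadMor D O) (x : TotOp D) : TotOp O :=
  mkOp (fop p (projT2 x)).

(** The index i is
    encoded as the length of the prefix l1 of inputs before the plugged one. *)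
Definition ULF_opmor D O (p : OperadMor D O) : Prop :=
  forall (l : list (Col D)) (out : Col D) (alpha : Op D l out)
         (L1 : list (Col O)) (c : Col O) (L2 : list (Col O)) (o : Col O)
         (L' : list (Col O)) (g : Op O (L1 ++ c :: L2) o) (h : Op O L' c),
    mkOp (fop p alpha) = mkOp (ocomp g h) ->
    let S := { x : list (Col D) * Col D * list (Col D) * Col D * list (Col D) &
               (Op D (fst (fst (fst (fst x))) ++ snd (fst (fst (fst x))) :: snd (fst (fst x)))
                     (snd (fst x))
                * Op D (snd x) (snd (fst (fst (fst x)))))%type } in
    let P := fun s : S =>
      length (fst (fst (fst (fst (projT1 s))))) = length L1 /\
      mkOp (ocomp (fst (projT2 s)) (snd (projT2 s))) = mkOp alpha /\
      mkOp (fop p (fst (projT2 s))) = mkOp g /\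
      mkOp (fop p (snd (projT2 s))) = mkOp h in
    exists s, P s /\ forall s', P s' -> s' = s.

Definition finitary_opmor D O (p : OperadMor D O) : Prop :=
  (forall c : Col O, finite_fiber (fcol p) c) /\
  (forall x : TotOp O, finite_fiber (opmap p) x).

Section Spliced.
Variable C : Category.

(** [chain A B [(A1,B1);...;(An,Bn)]] = sequences w0-w1-...-wn with
    w0 : A -> A1, wi : Bi -> A(i+1), wn : Bn -> B. *)
Inductive chain : Ob C -> Ob C -> list (Ob C * Ob C) -> Type :=
| ch0 : forall A B, Hom C A B -> chain A B []
| chS : forall A B A1 B1 l, Hom C A A1 -> chain B1 B l -> chain A B ((A1, B1) :: l).

Definition chain_hd A B A1 B1 l (x : chain A B ((A1, B1) :: l)) : Hom C A A1 :=
  match x in chain A0 B0 l0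
        return match l0 with [] => unit | (A2, _) :: _ => Hom C A0 A2 end with
  | ch0 _ => tt
  | chS w _ => w
  end.

Definition chain_tl A B A1 B1 l (x : chain A B ((A1, B1) :: l)) : chain B1 B l :=
  match x in chain A0 B0 l0
        return match l0 with [] => unit | (_, B2) :: l3 => chain B2 B0 l3 end with
  | ch0 _ => tt
  | chS _ r => r
  end.

Definition chain_pre A A' B l (f : Hom C A A') (x : chain A' B l) : chain A B l :=
  match x in chain A0 B0 l0 return Hom C A A0 -> chain A B0 l0 with
  | ch0 w => fun f => ch0 (ccomp f w)
  | chS w r => fun f => chS (ccomp f w) r
  end f.

Fixpoint chain_glue X Y B l' (x : chain X Y l') : forall l2, chain Y B l2 -> chain X B (l' ++ l2) :=
  match x in chain X0 Y0 l0 return forall l2, chain Y0 B l2 -> chain X0 B (l0 ++ l2) with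
  | ch0 u => fun l2 y => chain_pre u y
  | chS u r => fun l2 y => chS u (chain_glue r y)
  end.

Fixpoint wcomp (l1 : list (Ob C * Ob C)) (C1 C2 : Ob C) (l2 l' : list (Ob C * Ob C))
  : forall A B, chain A B (l1 ++ (C1, C2) :: l2) -> chain C1 C2 l' -> chain A B (l1 ++ l' ++ l2) :=
  match l1 return forall A B, chain A B (l1 ++ (C1, C2) :: l2) -> chain C1 C2 l' ->
                              chain A B (l1 ++ l' ++ l2) with
  | [] => fun A B g h => chain_pre (chain_hd g) (chain_glue h (chain_tl g))
  | (X1, X2) :: l1' => fun A B g h =>
      chS (chain_hd g) (wcomp (chain_tl g) h)
  end.

Definition W_Op (l : list (Ob C * Ob C)) (c : Ob C * Ob C) : Type := chain (fst c) (snd c) l.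

Definition W_id (c : Ob C * Ob C) : W_Op [c] c :=
  match c return W_Op [c] c with
  | (A, B) => chS (cid A) (ch0 (cid B))
  end.

Definition W_comp (l1 : list (Ob C * Ob C)) (c : Ob C * Ob C) (l2 : list (Ob C * Ob C))
  (out : Ob C * Ob C) (l' : list (Ob C * Ob C)) :
  W_Op (l1 ++ c :: l2) out -> W_Op l' c -> W_Op (l1 ++ l' ++ l2) out :=
  match c return W_Op (l1 ++ c :: l2) out -> W_Op l' c -> W_Op (l1 ++ l' ++ l2) out with
  | (C1, C2) => fun g h => wcomp g h
  end.

Definition W : OperadData :=
  {| Col := Ob C * Ob C; Op := W_Op; oid := W_id; ocomp := W_comp |}.

End Spliced.

Arguments chain : clear implicits.
Arguments W_Op : clear implicits.
Arguments W_id : clear implicits.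
Arguments W_comp : clear implicits.
Arguments wcomp : clear implicits.
Arguments ch0 {C A B} _.
Arguments chS {C A B A1 B1 l} _ _.

Section SplicedMap.
Variables (Q C : Category) (p : Functor Q C).

Definition pcol (x : Ob Q * Ob Q) : Ob C * Ob C := (fob p (fst x), fob p (snd x)).

Fixpoint chain_map A B l (x : chain Q A B l) : chain C (fob p A) (fob p B) (map pcol l) :=
  match x in chain _ A0 B0 l0 return chain C (fob p A0) (fob p B0) (map pcol l0) with
  | ch0 w => ch0 (fhom p w)
  | chS w r => chS (fhom p w) (chain_map r)
  end.

Definition W_map : OperadMor (W Q) (W C) :=
  @Build_OperadMor (W Q) (W C) pcol (fun l c (x : W_Op Q l c) => chain_map x).

End SplicedMap.

(* Main.v *)
Require Import Defs.
From Stdlib Require Import List Eqdep.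
Import ListNotations.
Set Implicit Arguments.
Unset Strict Implicit.

Definition asrc (C : Category) (a : Arr C) : Ob C := fst (projT1 a).
Definition atgt (C : Category) (a : Arr C) : Ob C := snd (projT1 a).

Fixpoint TL (C : Category) X Y l (x : chain C X Y l) : list (Arr C) :=
  match x with ch0 w => [mkArr w] | chS w r => mkArr w :: TL r end.

Definition TLt (C : Category) (t : TotOp (W C)) : list (Arr C) :=
  @TL C (fst (snd (projT1 t))) (snd (snd (projT1 t))) (fst (projT1 t)) (projT2 t).

Fixpoint cols (C : Category) (a : Arr C) (r : list (Arr C)) : list (Ob C * Ob C) :=
  match r with [] => [] | b :: r' => (atgt a, asrc b) :: cols b r' end.
Fixpoint lastA (C : Category) (a : Arr C) (r : list (Arr C)) : Arr C :=
  match r with [] => a | b :: r' => lastA b r' end.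
Fixpoint build (C : Category) (a : Arr C) (r : list (Arr C)) {struct r}
  : chain C (asrc a) (atgt (lastA a r)) (cols a r) :=
  match r return chain C (asrc a) (atgt (lastA a r)) (cols a r) with
  | [] => ch0 (projT2 a)
  | b :: r' => chS (projT2 a) (build b r')
  end.

Lemma TL_build (C : Category) (r : list (Arr C)) : forall a, TL (build a r) = a :: r.
Proof.
  induction r as [|b r IH]; intros [[x y] f]; simpl; [reflexivity|].
  rewrite IH. reflexivity.
Qed.

Lemma TL_shape (C : Category) X Y l (x : chain C X Y l) :
  exists a r, TL x = a :: r /\ l = cols a r /\ X = asrc a /\ Y = atgt (lastA a r).
Proof.
  induction x as [A B w | A B A1 B1 l w x IH].
  - exists (mkArr w), []. simpl. auto.
  - destruct IH as (a & r & E1 & E2 & E3 & E4).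
    exists (mkArr w), (a :: r). simpl. rewrite E1, E2, E3, E4. auto.
Qed.

Lemma mkArr_idx (C : Category) X Y X' Y' (f : Hom C X Y) (f' : Hom C X' Y') :
  mkArr f = mkArr f' -> X = X' /\ Y = Y'.
Proof.
  intro E. apply (f_equal (@projT1 _ _)) in E. simpl in E. injection E. auto.
Qed.

Lemma mkArr_inj2 (C : Category) X Y (f f' : Hom C X Y) : mkArr f = mkArr f' -> f = f'.
Proof. intro E. unfold mkArr in E. apply Eqdep.EqdepTheory.inj_pair2 in E. exact E. Qed.

Lemma TL_nonnil (C : Category) X Y l (x : chain C X Y l) : TL x <> [].
Proof. destruct x; simpl; discriminate. Qed.

Lemma cons_inj (T : Type) (a b : T) l l' : a :: l = b :: l' -> a = b /\ l = l'.
Proof. intro E. split; [exact (f_equal (fun x => hd a x) E) | exact (f_equal (@tl T) E)]. Qed.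

Lemma TL_inj0 (C : Category) X Y l (x : chain C X Y l) :
  forall X' Y' l' (y : chain C X' Y' l'), TL x = TL y ->
  @mkOp (W C) l (X, Y) x = @mkOp (W C) l' (X', Y') y.
Proof.
  induction x as [A B w | A B A1 B1 l w x IH]; intros X' Y' l' y E;
    destruct y as [A' B' w' | A' B' A1' B1' l' w' y]; simpl in E.
  - apply cons_inj in E as [E _]. destruct (mkArr_idx E); subst. apply mkArr_inj2 in E. subst. reflexivity.
  - apply cons_inj in E as [E E']. exfalso. apply (TL_nonnil (x:=y)). auto.
  - apply cons_inj in E as [E E']. exfalso. apply (TL_nonnil (x:=x)). auto.
  - apply cons_inj in E as [E E']. specialize (IH _ _ _ y E').
    pose proof (f_equal (@projT1 _ _) IH) as I1. simpl in I1. injection I1 as e1 e2 e3. subst.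
    apply Eqdep.EqdepTheory.inj_pair2 in IH. subst.
    destruct (mkArr_idx E); subst. apply mkArr_inj2 in E. subst. reflexivity.
Qed.

Lemma TL_inj (C : Category) l c (x : Op (W C) l c) l' c' (y : Op (W C) l' c') :
  TL (x : chain C (fst c) (snd c) l) = TL (y : chain C (fst c') (snd c') l') -> mkOp x = mkOp y.
Proof.
  destruct c, c'. apply TL_inj0.
Qed.

Inductive acomp (C : Category) : Arr C -> Arr C -> Arr C -> Prop :=
  acomp_i : forall X Y Z (f : Hom C X Y) (g : Hom C Y Z), acomp (mkArr f) (mkArr g) (mkArr (ccomp f g)).
Arguments acomp {C}.

Inductive PRE (C : Category) (x : Arr C) : list (Arr C) -> list (Arr C) -> Prop :=
  pre_i : forall r0 d rs, acomp x r0 d -> PRE x (r0 :: rs) (d :: rs).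
Arguments PRE {C}.

Inductive GL (C : Category) : list (Arr C) -> list (Arr C) -> list (Arr C) -> Prop :=
 | gl1 : forall h Y R, PRE h Y R -> GL [h] Y R
 | glS : forall h H Y R, GL H Y R -> GL (h :: H) Y (h :: R).
Arguments GL {C}.

Inductive Spl (C : Category) : nat -> list (Arr C) -> list (Arr C) -> list (Arr C) -> Prop :=
 | spl0 : forall g0 G H R K, GL H G R -> PRE g0 R K -> Spl 0 (g0 :: G) H K
 | splS : forall k g G H K, Spl k G H K -> Spl (S k) (g :: G) H (g :: K).
Arguments Spl {C}.

Lemma TL_pre (C : Category) X X' Y l (f : Hom C X X') (y : chain C X' Y l) :
  PRE (mkArr f) (TL y) (TL (chain_pre f y)).
Proof. destruct y; simpl; constructor; constructor. Qed.

Lemma TL_glue (C : Category) X Y l' (h : chain C X Y l') :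
  forall B l2 (y : chain C Y B l2), GL (TL h) (TL y) (TL (chain_glue h y)).
Proof.
  induction h; intros; simpl.
  - constructor. apply TL_pre.
  - constructor. apply IHh.
Qed.

Lemma TL_hdtl0 (C : Category) X Y L (g : chain C X Y L) :
  match L return chain C X Y L -> Prop with
  | [] => fun _ => True
  | (A1, B1) :: l => fun g => TL g = mkArr (chain_hd g) :: TL (chain_tl g)
  end g.
Proof. destruct g; simpl; auto. Qed.

Lemma TL_hdtl (C : Category) X Y A1 B1 l (g : chain C X Y ((A1, B1) :: l)) :
  TL g = mkArr (chain_hd g) :: TL (chain_tl g).
Proof. exact (TL_hdtl0 g). Qed.

Lemma TL_wcomp (C : Category) l1 : forall C1 C2 l2 l' X Y
  (g : chain C X Y (l1 ++ (C1, C2) :: l2)) (h : chain C C1 C2 l'),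
  Spl (length l1) (TL g) (TL h) (TL (wcomp C l1 C1 C2 l2 l' X Y g h)).
Proof.
  induction l1 as [|[X1 X2] l1 IH]; intros; simpl.
  - pose proof (TL_hdtl (g : chain C X Y ((C1, C2) :: l2))) as E. simpl in E. rewrite E.
    econstructor. apply TL_glue. apply TL_pre.
  - pose proof (TL_hdtl (g : chain C X Y ((X1, X2) :: l1 ++ (C1, C2) :: l2))) as E.
    rewrite E. constructor. apply IH.
Qed.

Lemma TL_Wcomp (C : Category) l1 c l2 out l' (g : Op (W C) (l1 ++ c :: l2) out) (h : Op (W C) l' c) :
  Spl (length l1) (TL (g : chain C (fst out) (snd out) _)) (TL (h : chain C (fst c) (snd c) l'))
      (TL (W_comp C l1 c l2 out l' g h : chain C (fst out) (snd out) _)).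
Proof. destruct c. apply TL_wcomp. Qed.

Lemma TL_map (Q C : Category) (p : Functor Q C) X Y l (x : chain Q X Y l) :
  TL (chain_map p x) = map (arrmap p) (TL x).
Proof. induction x; simpl; f_equal; auto. Qed.

Lemma acomp_inv (C : Category) (u v w : Arr C) : acomp u v w ->
  exists X Y Z (f : Hom C X Y) (g : Hom C Y Z), u = mkArr f /\ v = mkArr g /\ w = mkArr (ccomp f g).
Proof. destruct 1. eauto 10. Qed.

Lemma acomp_fun (C : Category) (u v w w' : Arr C) : acomp u v w -> acomp u v w' -> w = w'.
Proof.
  destruct 1 as [X Y Z f g]. intro H. apply acomp_inv in H as (X' & Y' & Z' & f' & g' & E1 & E2 & ->).
  destruct (mkArr_idx E1); subst. apply mkArr_inj2 in E1; subst.
  destruct (mkArr_idx E2); subst. apply mkArr_inj2 in E2; subst. reflexivity.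
Qed.

Lemma acomp_ends (C : Category) (u v w : Arr C) : acomp u v w ->
  atgt u = asrc v /\ asrc w = asrc u /\ atgt w = atgt v.
Proof. destruct 1. simpl. auto. Qed.

Lemma acomp_map (Q C : Category) (p : Functor Q C) u v w : acomp u v w ->
  acomp (arrmap p u) (arrmap p v) (arrmap p w).
Proof. destruct 1. unfold arrmap; simpl. rewrite fhom_comp. constructor. Qed.

Lemma PRE_fun (C : Category) (x : Arr C) R K K' : PRE x R K -> PRE x R K' -> K = K'.
Proof.
  destruct 1 as [r0 d rs H]. intro H'. inversion H'; subst.
  f_equal. eapply acomp_fun; eauto.
Qed.

Lemma GL_fun (C : Category) (H Y R : list (Arr C)) : GL H Y R -> forall R', GL H Y R' -> R = R'.
Proof.
  induction 1 as [h Y R HP | h H Y R HG IH]; intros R' G'; inversion G'; subst.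
  - eapply PRE_fun; eauto.
  - inversion H4.
  - inversion HG.
  - f_equal. auto.
Qed.

Lemma Spl_fun (C : Category) k (B G A : list (Arr C)) : Spl k B G A -> forall A', Spl k B G A' -> A = A'.
Proof.
  induction 1; intros A' S'; inversion S'; subst.
  - assert (R = R0) by (eapply GL_fun; eauto). subst. eapply PRE_fun; eauto.
  - f_equal; auto.
Qed.

Lemma PRE_map (Q C : Category) (p : Functor Q C) x R K : PRE x R K ->
  PRE (arrmap p x) (map (arrmap p) R) (map (arrmap p) K).
Proof. destruct 1. simpl. constructor. apply acomp_map. auto. Qed.

Lemma GL_map (Q C : Category) (p : Functor Q C) H Y R : GL H Y R ->
  GL (map (arrmap p) H) (map (arrmap p) Y) (map (arrmap p) R).
Proof. induction 1; simpl; constructor; auto. apply PRE_map; auto. Qed.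

Lemma map_cons_inv (A B : Type) (f : A -> B) (l : list A) b r :
  b :: r = map f l -> exists a l', l = a :: l' /\ b = f a /\ r = map f l'.
Proof. destruct l; simpl; intro E; [discriminate|]. apply cons_inj in E as [E1 E2]. eauto. Qed.

Section Lift.
Variables (Q C : Category) (p : Functor Q C).
Hypothesis Hp : ULF_functor p.
Local Notation P := (arrmap p).

Lemma aulf_ex (a : Arr Q) u v : acomp u v (P a) ->
  exists b g, acomp b g a /\ P b = u /\ P g = v.
Proof.
  destruct a as [[a b] al]. intro H.
  apply acomp_inv in H as (X & Y & Z & f & g & -> & -> & E).
  unfold arrmap in E; simpl in E.
  destruct (mkArr_idx E); subst. apply mkArr_inj2 in E.
  pose proof (Hp E) as HH. cbv zeta in HH.
  destruct HH as [[m [be ga]] [[H1 [H2 H3]] _]]. simpl in *.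
  exists (mkArr be), (mkArr ga). split; [|split; assumption].
  rewrite <- H1. constructor.
Qed.

Lemma aulf_un (a b g b' g' : Arr Q) : acomp b g a -> acomp b' g' a ->
  P b = P b' -> P g = P g' -> b = b' /\ g = g'.
Proof.
  destruct 1 as [X Y Z f g]. intro H.
  apply acomp_inv in H as (X1 & Y1 & Z1 & f1 & g1 & -> & -> & E).
  destruct (mkArr_idx E); subst. apply mkArr_inj2 in E.
  intros H3 H4. unfold arrmap in H3, H4; simpl in H3, H4.
  pose proof (Hp (fhom_comp p f g)) as HH. cbv zeta in HH.
  destruct HH as [s [Hs Hu]].
  assert (E1 : existT _ Y (f, g) = s)
    by (apply Hu; simpl; auto).
  assert (E2 : existT _ Y1 (f1, g1) = s)
    by (apply Hu; simpl; auto).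
  rewrite <- E2 in E1. pose proof (f_equal (@projT1 _ _) E1) as E3. simpl in E3. subst.
  apply Eqdep.EqdepTheory.inj_pair2 in E1. injection E1 as -> ->. auto.
Qed.

Lemma PRE_lift x R A : PRE x R (map P A) -> exists b Rq, PRE b Rq A /\ P b = x /\ map P Rq = R.
Proof.
  intro H. remember (map P A) as K eqn:EK. destruct H as [r0 d rs Hc].
  apply map_cons_inv in EK as (a & A' & -> & -> & ->).
  destruct (aulf_ex Hc) as (b & g & Hbg & E1 & E2).
  exists b, (g :: A'). split; [constructor; auto|]. simpl. subst. auto.
Qed.

Lemma PRE_un b Rq b' Rq' A : PRE b Rq A -> PRE b' Rq' A -> P b = P b' -> map P Rq = map P Rq' ->
  b = b' /\ Rq = Rq'.
Proof.
  destruct 1 as [r0 d rs Hc]. intro H. inversion H; subst. intros E1 E2.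
  simpl in E2. apply cons_inj in E2 as [E2 _].
  destruct (aulf_un Hc H2 E1 E2). subst. auto.
Qed.

Lemma GL_lift H Y R : GL H Y R -> forall A, R = map P A ->
  exists Hq Yq, GL Hq Yq A /\ map P Hq = H /\ map P Yq = Y.
Proof.
  induction 1 as [h Y R HP | h H Y R HG IH]; intros A EA; subst.
  - destruct (PRE_lift HP) as (b & Rq & H1 & H2 & H3).
    exists [b], Rq. split; [constructor; auto|]. simpl. subst. auto.
  - apply map_cons_inv in EA as (a & A' & -> & -> & ->).
    destruct (IH A' eq_refl) as (Hq & Yq & H1 & H2 & H3).
    exists (a :: Hq), Yq. split; [constructor; auto|]. simpl. subst. auto.
Qed.

Lemma GL_un Hq Yq A : GL Hq Yq A -> forall Hq' Yq', GL Hq' Yq' A ->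
  map P Hq = map P Hq' -> map P Yq = map P Yq' -> Hq = Hq' /\ Yq = Yq'.
Proof.
  induction 1 as [h Y R HP | h H Y R HG IH]; intros Hq' Yq' G2 E1 E2;
    inversion G2 as [h' Y' R' HP' | h' H' Y' R' HG']; subst.
  - simpl in E1. apply cons_inj in E1 as [E1 _].
    destruct (PRE_un HP HP' E1 E2). subst. auto.
  - simpl in E1. apply cons_inj in E1 as [_ E1]. destruct H'; [|discriminate].
    inversion HG'.
  - simpl in E1. apply cons_inj in E1 as [_ E1]. destruct H; [|discriminate].
    inversion HG.
  - simpl in E1. apply cons_inj in E1 as [_ E1].
    destruct (IH _ _ HG' E1 E2). subst. auto.
Qed.

Lemma Spl_lift k G H K : Spl k G H K -> forall A, K = map P A ->
  exists B Ga, Spl k B Ga A /\ map P B = G /\ map P Ga = H.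
Proof.
  induction 1 as [g0 G H R K HG HP | k g G H K HS IH]; intros A EA; subst.
  - destruct (PRE_lift HP) as (b & Rq & H1 & H2 & H3).
    destruct (GL_lift HG (eq_sym H3)) as (Ga & Gq & H4 & H5 & H6).
    exists (b :: Gq), Ga. split; [econstructor; eauto|]. simpl. subst. auto.
  - apply map_cons_inv in EA as (a & A' & -> & -> & ->).
    destruct (IH A' eq_refl) as (B & Ga & H1 & H2 & H3).
    exists (a :: B), Ga. split; [constructor; auto|]. simpl. subst. auto.
Qed.

Lemma Spl_un k B Ga A : Spl k B Ga A -> forall B' Ga', Spl k B' Ga' A ->
  map P B = map P B' -> map P Ga = map P Ga' -> B = B' /\ Ga = Ga'.
Proof.
  induction 1 as [g0 G H R K HG HP | k g G H K HS IH]; intros B' Ga' S2 E1 E2;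
    inversion S2 as [g0' G' H' R' K' HG' HP' | k' g' G' H' K' HS']; subst.
  - simpl in E1. apply cons_inj in E1 as [E1 E3].
    assert (ER : map P R = map P R').
    { apply (GL_fun (GL_map p HG)). rewrite E2, E3. apply GL_map. auto. }
    destruct (PRE_un HP HP' E1 ER). subst.
    destruct (GL_un HG HG' E2 E3). subst. auto.
  - simpl in E1. apply cons_inj in E1 as [_ E1].
    destruct (IH _ _ HS' E1 E2). subst. auto.
Qed.

End Lift.

Lemma GL_shape (C : Category) (H Y R : list (Arr C)) : GL H Y R ->
  exists h0 hs y0 ys r0 rs, H = h0 :: hs /\ Y = y0 :: ys /\ R = r0 :: rs /\
    asrc r0 = asrc h0 /\ atgt (lastA h0 hs) = asrc y0.
Proof.
  induction 1 as [h Y R HP | h H Y R HG IH].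
  - destruct HP as [r0 d rs Hc]. destruct (acomp_ends Hc) as (e1 & e2 & e3).
    exists h, [], r0, rs, d, rs. simpl. auto 10.
  - destruct IH as (h0 & hs & y0 & ys & r0 & rs & -> & -> & -> & e1 & e2).
    exists h, (h0 :: hs), y0, ys, h, (r0 :: rs). simpl. auto 10.
Qed.

Lemma Spl_shape (C : Category) k (B G A : list (Arr C)) : Spl k B G A ->
  exists b0 bs g0 gs l1 l2, B = b0 :: bs /\ G = g0 :: gs /\
    cols b0 bs = l1 ++ (asrc g0, atgt (lastA g0 gs)) :: l2 /\ length l1 = k.
Proof.
  induction 1 as [g0 G H R K HG HP | k g G H K HS IH].
  - destruct (GL_shape HG) as (h0 & hs & y0 & ys & r0 & rs & -> & -> & -> & e1 & e2).
    inversion HP as [r0' d rs' Hc]; subst.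
    destruct (acomp_ends Hc) as (e3 & _).
    exists g0, (y0 :: ys), h0, hs, [], (cols y0 ys). simpl.
    rewrite e3, e1, e2. auto.
  - destruct IH as (b0 & bs & g0 & gs & l1 & l2 & -> & -> & E & e).
    exists g, (b0 :: bs), g0, gs, ((atgt g, asrc b0) :: l1), l2. simpl.
    rewrite E, e. auto.
Qed.

Lemma app_split (T : Type) (l1 : list T) : forall l1' a a' l2 l2',
  length l1 = length l1' -> l1 ++ a :: l2 = l1' ++ a' :: l2' -> l1 = l1' /\ a = a' /\ l2 = l2'.
Proof.
  induction l1 as [|x l1 IH]; intros [|y l1'] a a' l2 l2' Hl E; simpl in *; try discriminate.
  - apply cons_inj in E as [-> ->]. auto.
  - injection Hl as Hl. apply cons_inj in E as [-> E].
    destruct (IH _ _ _ _ _ Hl E) as (-> & -> & ->). auto.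
Qed.

Definition SS (Q : Category) :=
  { x : list (Ob Q * Ob Q) * (Ob Q * Ob Q) * list (Ob Q * Ob Q) * (Ob Q * Ob Q) * list (Ob Q * Ob Q) &
    (Op (W Q) (fst (fst (fst (fst x))) ++ snd (fst (fst (fst x))) :: snd (fst (fst x))) (snd (fst x))
     * Op (W Q) (snd x) (snd (fst (fst (fst x)))))%type }.

Definition TLo (Q : Category) l c (x : Op (W Q) l c) : list (Arr Q) :=
  TL (x : chain Q (fst c) (snd c) l).

Lemma TLo_inj (C : Category) l c (x : Op (W C) l c) l' c' (y : Op (W C) l' c') :
  TLo x = TLo y -> mkOp x = mkOp y.
Proof. apply TL_inj. Qed.

Lemma S_eq (Q : Category) (s s' : SS Q) :
  length (fst (fst (fst (fst (projT1 s))))) = length (fst (fst (fst (fst (projT1 s'))))) ->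
  TLo (fst (projT2 s)) = TLo (fst (projT2 s')) ->
  TLo (snd (projT2 s)) = TLo (snd (projT2 s')) -> s = s'.
Proof.
  destruct s as [[[[[l1 c] l2] o] l'] [b g]].
  destruct s' as [[[[[l1' c'] l2'] o'] l''] [b' g']]. simpl.
  intros Hl Hb Hg. apply TLo_inj in Hb. apply TLo_inj in Hg.
  pose proof (f_equal (@projT1 _ _) Hb) as Eb. pose proof (f_equal (@projT1 _ _) Hg) as Eg.
  simpl in Eb, Eg. injection Eb as Eb Eo. injection Eg as Eg Ec.
  destruct (app_split Hl Eb) as (e1 & e2 & e3). subst.
  apply Eqdep.EqdepTheory.inj_pair2 in Hb. apply Eqdep.EqdepTheory.inj_pair2 in Hg. subst.
  reflexivity.
Qed.

Lemma TLo_mkOp (C : Category) l c (x : Op (W C) l c) l' c' (y : Op (W C) l' c') :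
  mkOp x = mkOp y -> TLo x = TLo y.
Proof. intro E. exact (f_equal (@TLt C) E). Qed.

Lemma ulf_part (Q C : Category) (p : Functor Q C) : ULF_functor p -> ULF_opmor (W_map p).
Proof.
  intros Hp l out alpha L1 c L2 o L' g h E. cbv zeta.
  apply TLo_mkOp in E. unfold TLo in E. simpl in E. rewrite TL_map in E.
  pose proof (TL_Wcomp g h) as HS. rewrite <- E in HS.
  destruct (Spl_lift Hp HS (eq_refl _)) as (B & Ga & HS1 & HB & HG).
  destruct (Spl_shape HS1) as (b0 & bs & g0 & gs & l1 & l2 & -> & -> & Ec & Hl).
  pose proof (TL_build bs b0) as TB. revert TB. generalize (build b0 bs). rewrite Ec.
  intros beta TB.
  pose (s := existT (fun x : list (Ob Q * Ob Q) * (Ob Q * Ob Q) * list (Ob Q * Ob Q) * (Ob Q * Ob Q) * list (Ob Q * Ob Q) =>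
    (Op (W Q) (fst (fst (fst (fst x))) ++ snd (fst (fst (fst x))) :: snd (fst (fst x))) (snd (fst x))
     * Op (W Q) (snd x) (snd (fst (fst (fst x)))))%type)
    ((((l1, (asrc g0, atgt (lastA g0 gs))), l2), (asrc b0, atgt (lastA b0 bs))), cols g0 gs)
    (beta, build g0 gs)).
  assert (Ps : forall s' : SS Q,
    length (fst (fst (fst (fst (projT1 s'))))) = length L1 ->
    mkOp (ocomp (fst (projT2 s')) (snd (projT2 s'))) = mkOp alpha ->
    mkOp (fop (W_map p) (fst (projT2 s'))) = mkOp g ->
    mkOp (fop (W_map p) (snd (projT2 s'))) = mkOp h ->
    TLo (fst (projT2 s')) = b0 :: bs /\ TLo (snd (projT2 s')) = g0 :: gs).
  { intros [x [be ga]] H1 H2 H3 H4. simpl in *.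
    apply TLo_mkOp in H2, H3, H4. unfold TLo in *. simpl in H2, H3, H4.
    rewrite TL_map in H3, H4.
    pose proof (TL_Wcomp be ga) as HS2. simpl in HS2. rewrite H2 in HS2. rewrite H1 in HS2.
    destruct (Spl_un Hp HS2 HS1); [rewrite H3; auto | rewrite H4; auto |].
    auto. }
  exists s. split.
  - simpl. split; [exact Hl|]. split; [|split].
    + apply TL_inj. symmetry. eapply Spl_fun; [exact HS1|].
      pose proof (@TL_Wcomp Q l1 (asrc g0, atgt (lastA g0 gs)) l2 (asrc b0, atgt (lastA b0 bs)) (cols g0 gs) beta (build g0 gs)) as HS3. simpl in HS3.
      rewrite TB, TL_build, Hl in HS3. exact HS3.
    + apply TL_inj. simpl. rewrite TL_map, TB. auto.
    + apply TL_inj. simpl. rewrite TL_map, TL_build. auto.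
  - intros s' [H1 [H2 [H3 H4]]].
    destruct (Ps s' H1 H2 H3 H4) as [E1 E2].
    apply S_eq.
    + simpl. simpl in H1. rewrite H1. auto.
    + rewrite E1. unfold TLo. simpl. auto.
    + rewrite E2. unfold TLo. simpl. symmetry. apply TL_build.
Qed.

Lemma fin_lists (Q C : Category) (p : Functor Q C) :
  (forall x : Arr C, finite_fiber (arrmap p) x) ->
  forall K, exists LL, forall L, map (arrmap p) L = K -> In L LL.
Proof.
  intros Hf K. induction K as [|a K [LK HK]].
  - exists [[]]. intros [|x L] E; [simpl; auto | discriminate].
  - destruct (Hf a) as [la Ha].
    exists (flat_map (fun x => map (cons x) LK) la).
    intros [|x L] E; [discriminate|]. simpl in E. apply cons_inj in E as [E1 E2].
    apply in_flat_map. exists x. split; [auto|]. apply in_map. auto.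
Qed.

Lemma fin_part (Q C : Category) (p : Functor Q C) : finitary_functor p -> finitary_opmor (W_map p).
Proof.
  intros [Hob Harr]. split.
  - intros [X Y]. destruct (Hob X) as [lx Hx], (Hob Y) as [ly Hy].
    exists (list_prod lx ly). intros [x y] E. simpl in E. unfold pcol in E. simpl in E.
    injection E as E1 E2. apply in_prod; auto.
  - intros t. destruct (fin_lists Harr (TLt t)) as [LL HLL].
    exists (flat_map (fun L => match L with [] => []
      | a :: r => [@mkOp (W Q) (cols a r) (asrc a, atgt (lastA a r)) (build a r)] end) LL).
    intros [[l c] y] Et.
    assert (EL : map (arrmap p) (TLo (y : Op (W Q) l c)) = TLt t).
    { rewrite <- Et. unfold TLo, TLt. simpl. rewrite TL_map. reflexivity. }
    apply HLL in EL.
    destruct (TL_shape (y : chain Q (fst c) (snd c) l)) as (a & r & Ey & _).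
    apply in_flat_map. exists (a :: r). split.
    + unfold TLo in EL. rewrite <- Ey. exact EL.
    + simpl. left. apply TL_inj. simpl. rewrite TL_build. rewrite Ey. reflexivity.
Qed.

Theorem mainTheorem5 (Q C : Category) (p : Functor Q C) :
  (ULF_functor p -> ULF_opmor (W_map p)) /\
  (finitary_functor p -> finitary_opmor (W_map p)).
Proof. split; [apply ulf_part | apply fin_part]. Qed.
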